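(* Let $d\ge 1$ be an integer and let $\mathcal{P}$ be the set of all (nonempty) integer partitions. As formal power series, $$\sum_{\lambda\in\mathcal{P}}t^{\mathrm{mod}_d(\lambda)}x^{\ell(\lambda)}y^{\lambda_1}=\frac{txy(1-x)^d+\frac{xy}{x+y-1}\left(y^{d+1}-y(1-x)^d\right)}{(1-tx)(1-x)^d-y^{d+1}}.$$ In particular, $$\sum_{\lambda\in\mathcal{P}}t^{\mathrm{mod}'_d(\lambda)}x^{\Gamma(\lambda)}=\frac{x\left(tx^{d+1}+(1-tx)^d(x-1)\right)}{(1-x-tx)\left((1-tx)^d(x-1)+x^{d+1}\right)}.$$
   Context: A partition is a finite nonempty weakly decreasing sequence $\lambda=(\lambda_1,\ldots,\lambda_k)$ of positive integers; $\ell(\lambda)=k$ and $\lambda_1$ is the largest part. The perimeter is $\Gamma(\lambda)=\lambda_1+\ell(\lambda)-1$. $\mathrm{mod}_d(\lambda)=|\{i:\lambda_i\equiv 1\pmod{d+1}\}|$ and $\mathrm{mod}'_d(\lambda)=\ell(\lambda)-\mathrm{mod}_d(\lambda)$ (the number of parts not congruent to $1$ modulo $d+1$). *)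

(* Defs.v *)
From mathcomp Require Export all_boot all_order all_algebra.
Set Implicit Arguments. Unset Strict Implicit. Unset Printing Implicit Defensive.
Import GRing.Theory Num.Theory.

Definition is_partition (s : seq nat) : bool :=
  [&& s != [::], sorted geq s & all (fun a => 0 < a) s].
(* largest part lambda_1 and length ell(lambda) = size s *)
Definition largest (s : seq nat) : nat := head 0 s.
Definition perimeter (s : seq nat) : nat := largest s + size s - 1.
Definition mod_d (d : nat) (s : seq nat) : nat :=
  count (fun a => a %% d.+1 == 1 %% d.+1) s.
Definition mod'_d (d : nat) (s : seq nat) : nat := size s - mod_d d s.

(* Number of partitions with mod_d = j, length k and largest part m.
   Such partitions are exactly the k-tuples with entries in [0,m]
   that are partitions with largest part m. *)
Definition coefA (d j k m : nat) : nat :=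
  #|[set u : k.-tuple 'I_m.+1 |
      let s := map val u in
      [&& is_partition s, largest s == m & mod_d d s == j]]|.

(* Number of partitions with mod'_d = j and perimeter g.  Such a partition
   has length k <= g and all parts <= g. *)
Definition coefB (d j g : nat) : nat :=
  \sum_(k < g.+1)
    #|[set u : k.-tuple 'I_g.+1 |
        let s := map val u in
        [&& is_partition s, perimeter s == g & mod'_d d s == j]]|.

(* ---------- Formal power series in t, x, y over int ----------
   A series is its coefficient function: f a b c = coefficient of t^a x^b y^c. *)
Definition series := nat -> nat -> nat -> int.

Definition sadd (f g : series) : series := fun a b c => (f a b c + g a b c)%R.
Definition sopp (f : series) : series := fun a b c => (- f a b c)%R.
Definition smul (f g : series) : series := fun a b c =>
  (\sum_(i < a.+1) \sum_(j < b.+1) \sum_(k < c.+1)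
      f i j k * g (a - i)%N (b - j)%N (c - k)%N)%R.
Definition smono (p q r : nat) : series := fun a b c =>
  if [&& a == p, b == q & c == r] then 1%R else 0%R.
Definition sone : series := smono 0 0 0.
Definition sT : series := smono 1 0 0.
Definition sX : series := smono 0 1 0.
Definition sY : series := smono 0 0 1.
Definition spow (f : series) (n : nat) : series := iter n (smul f) sone.

Declare Scope series_scope.
Delimit Scope series_scope with ser.
Notation "f + g" := (sadd f g) : series_scope.
Notation "f - g" := (sadd f (sopp g)) : series_scope.
Notation "f * g" := (smul f g) : series_scope.
Notation "f ^ n" := (spow f n) : series_scope.
Notation "1" := sone : series_scope.

(* Main.v *)
Require Import Defs.
From HB Require Import structures.
From mathcomp Require Import all_boot all_algebra.
From mathcomp Require Import boolp.
From mathcomp Require Import ring zify.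
Import GRing.Theory Num.Theory.
Require Import Defs.


Fixpoint D (m : nat) : nat -> seq (seq nat) :=
  match m with
  | 0 => fun k => if k is 0 then [:: [::]] else [::]
  | m'.+1 => fix Dk k := match k with
              | 0 => [:: [::]]
              | k'.+1 => D m' k ++ map (cons m'.+1) (Dk k')
             end
  end.

Lemma D_0 m : D m 0 = [:: [::]].
Proof. by case: m. Qed.
Lemma D0S k : D 0 k.+1 = [::].
Proof. by []. Qed.
Lemma DSS m k : D m.+1 k.+1 = D m k.+1 ++ map (cons m.+1) (D m.+1 k).
Proof. by []. Qed.

Lemma geq_trans : transitive geq.
Proof. by move=> a b c /= H1 H2; apply: leq_trans H2 H1. Qed.

Lemma mem_map_cons x (L : seq (seq nat)) y s :
  (y :: s \in map (cons x) L) = (y == x) && (s \in L).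
Proof.
apply/mapP/andP => [[s' Hs' [-> ->]] | [/eqP -> Hs]]; first by [].
by exists s.
Qed.

Lemma memD m k s :
  (s \in D m k) = [&& size s == k, sorted geq s & all (fun a => 0 < a <= m) s].
Proof.
elim: m k s => [|m IHm] k s.
  case: k => [|k]; case: s => [|x s] //=.
  by rewrite in_nil; case: x => [|x] /=; rewrite ?ltnn ?andbF.
elim: k s => [|k IHk] s.
  rewrite D_0 mem_seq1; case: s => [|x s] //=.
rewrite DSS mem_cat IHm.
case: s => [|x s].
  by rewrite /=; apply/negbTE/mapP => [[s' _]].
rewrite mem_map_cons IHk /= !(path_sortedE geq_trans) eqSS.
apply/idP/idP.
  case/orP => [/and4P [-> /andP [H1 ->] /andP [-> Hx] H3] | /and4P [/eqP -> -> H2 H3]].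
    rewrite H1 /= leqW //=.
    by apply: sub_all H3 => a /andP [-> Ha]; rewrite leqW.
  rewrite leqnn H2 H3 /= andbT andbT.
  by apply: sub_all H3 => a /andP [].
case/and4P => -> /andP [H1 H2] /andP [Hx0 Hx] H3.
case: (boolP (x == m.+1)) => Hxm; first by rewrite /= H2 H3 orbT.
have Hxm' : x <= m by rewrite leq_eqVlt (negbTE Hxm) /= in Hx.
rewrite H1 H2 Hx0 Hxm' /=; apply/orP; left.
apply/allP => a Ha; move/allP: H3 => /(_ a Ha) /andP [-> _].
by move/allP: H1 => /(_ a Ha) /= Hax; rewrite (leq_trans Hax).
Qed.

Lemma uniq_D m k : uniq (D m k).
Proof.
elim: m k => [|m IHm] k; first by case: k.
elim: k => [|k IHk]; first by [].
rewrite DSS cat_uniq IHm /= map_inj_uniq ?IHk ?andbT; last by move=> x y [].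
apply/hasPn => s /mapP [s' _ ->].
by rewrite memD /= ltnn !andbF.
Qed.

Definition st (w : nat -> nat) (s : seq nat) := sumn (map w s).

Definition Nst w m k j := count (fun s => st w s == j) (D m k).

Lemma Nst_0k w k j : Nst w 0 k j = ((k == 0) && (j == 0)).
Proof. by case: k => [|k] //=; rewrite /Nst /= addn0; case: j. Qed.

Lemma Nst_m0 w m j : Nst w m 0 j = (j == 0).
Proof. by rewrite /Nst D_0 /= addn0; case: j. Qed.

Lemma Nst_SS w m k j : Nst w m.+1 k.+1 j =
  Nst w m k.+1 j + (if w m.+1 <= j then Nst w m.+1 k (j - w m.+1) else 0).
Proof.
rewrite /Nst DSS count_cat count_map; congr (_ + _).
case: leqP => H.
  apply: eq_count => s /=; rewrite /st /=; apply/eqP/eqP; lia.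
apply/eqP; rewrite eqn0Ngt -has_count; apply/hasPn => s _ /=.
rewrite /st /=; apply/eqP; lia.
Qed.

Lemma count_largest (Q : pred (seq nat)) m k :
  count Q (D m.+1 k) = count Q (D m k) + count (fun s => (largest s == m.+1) && Q s) (D m.+1 k).
Proof.
case: k => [|k]; first by rewrite !D_0 /= !addn0.
rewrite DSS !count_cat; congr (_ + _).
have -> : count (fun s => (largest s == m.+1) && Q s) (D m k.+1) = 0.
  apply/eqP; rewrite eqn0Ngt -has_count; apply/hasPn => s.
  rewrite memD; case: s => [|x s] //= /and4P [_ _ /andP [_ Hx] _].
  by rewrite eqn_leq ltnNge Hx andbF.
rewrite add0n !count_map; apply: eq_count => s /=.
by rewrite eqxx.
Qed.

Lemma map_val_inord m (s : seq nat) : all (fun a => a < m.+1) s ->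
  map val (map (@inord m) s) = s.
Proof.
elim: s => [|x s IH] //= /andP [Hx Hs].
by rewrite inordK // IH.
Qed.

Lemma card_tuple_D m k (P : pred (seq nat)) :
  (forall s, P s -> sorted geq s && all (fun a => 0 < a) s) ->
  #|[set u : k.-tuple 'I_m.+1 | P (map val u)]| = count P (D m k).
Proof.
move=> HP.
rewrite cardE -(size_map (fun u : k.-tuple 'I_m.+1 => map val u)) -size_filter.
apply: perm_size; apply: uniq_perm.
- rewrite map_inj_uniq ?enum_uniq //.
  by move=> u v /(inj_map val_inj) /val_inj.
- by rewrite filter_uniq ?uniq_D.
move=> s; rewrite mem_filter; apply/mapP/andP.
  move=> [u]; rewrite mem_enum inE => Hu ->; split => //.
  move/HP: (Hu) => /andP [H1 H2].
  rewrite memD size_map size_tuple eqxx H1 /=.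
  apply/allP => a /mapP [i Hi ->]; move/allP: H2 => /(_ (val i)) -> /=.
    by rewrite -ltnS ltn_ord.
  by apply/mapP; exists i.
move=> [Hs]; rewrite memD => /and3P [/eqP Hsz _ Hall].
have Hsz' : size (map (@inord m) s) == k by rewrite size_map Hsz.
have Hval : map val (map (@inord m) s) = s.
  apply: map_val_inord; apply: sub_all Hall => a /andP [_ Ha]; by rewrite ltnS.
exists (Tuple Hsz') => //.
by rewrite mem_enum inE /= Hval.
Qed.


Local Open Scope ring_scope.

Definition szero : series := fun _ _ _ => 0.

Definition coef3 (p : {poly {poly {poly int}}}) : series :=
  fun a b c => p`_a`_b`_c.

Lemma coef3M p q a b c : coef3 (p * q) a b c = smul (coef3 p) (coef3 q) a b c.
Proof.
rewrite /coef3 /smul coefM !coef_sum; apply: eq_bigr => i _.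
rewrite coefM !coef_sum; apply: eq_bigr => j _.
by rewrite coefM.
Qed.

Lemma smul_local f g f' g' a b c :
  (forall i j k, (i <= a)%N -> (j <= b)%N -> (k <= c)%N -> f i j k = f' i j k) ->
  (forall i j k, (i <= a)%N -> (j <= b)%N -> (k <= c)%N -> g i j k = g' i j k) ->
  smul f g a b c = smul f' g' a b c.
Proof.
move=> Hf Hg; rewrite /smul; apply: eq_bigr => [[i Hi]] _ /=.
apply: eq_bigr => [[j Hj]] _ /=; apply: eq_bigr => [[k Hk]] _ /=.
by rewrite Hf ?Hg ?leq_subr // -ltnS.
Qed.

Definition tr (N : nat) (f : series) : {poly {poly {poly int}}} :=
  \poly_(i < N) \poly_(j < N) \poly_(k < N) f i j k.

Lemma coef3_tr N f i j k : (i < N)%N -> (j < N)%N -> (k < N)%N ->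
  coef3 (tr N f) i j k = f i j k.
Proof. by move=> Hi Hj Hk; rewrite /coef3 /tr coef_poly Hi coef_poly Hj coef_poly Hk. Qed.

Lemma smul_tr N f g a b c : (a < N)%N -> (b < N)%N -> (c < N)%N ->
  smul f g a b c = coef3 (tr N f * tr N g) a b c.
Proof.
move=> Ha Hb Hc; rewrite coef3M; apply: smul_local => i j k Hi Hj Hk;
 rewrite coef3_tr //; lia.
Qed.

Lemma smulA : associative smul.
Proof.
move=> f g h; apply: funext => a; apply: funext => b; apply: funext => c.
pose N := (a + b + c).+1.
have Ha : (a < N)%N by rewrite /N; lia.
have Hb : (b < N)%N by rewrite /N; lia.
have Hc : (c < N)%N by rewrite /N; lia.
transitivity (coef3 (tr N f * (tr N g * tr N h)) a b c).
  rewrite coef3M; apply: smul_local => i j k Hi Hj Hk.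
    by rewrite coef3_tr //; lia.
  by rewrite -smul_tr //; lia.
rewrite mulrA.
transitivity (coef3 (tr N f * tr N g * tr N h) a b c) => //.
rewrite coef3M; apply: smul_local => i j k Hi Hj Hk.
  by rewrite -smul_tr //; lia.
by rewrite coef3_tr //; lia.
Qed.

Lemma smulC : commutative smul.
Proof.
move=> f g; apply: funext => a; apply: funext => b; apply: funext => c.
pose N := (a + b + c).+1.
rewrite (@smul_tr N) ?(@smul_tr N g) /N; try lia.
by rewrite mulrC.
Qed.

Lemma coef3_1 a b c : coef3 1 a b c = sone a b c.
Proof.
rewrite /coef3 /sone /smono coef1.
case: a => [|a] /=; last by rewrite coef0 coef0.
case: b => [|b] /=; rewrite ?coef1 ?coef0 //.
by case: c.
Qed.

Lemma smul1 : left_id sone smul.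
Proof.
move=> f; apply: funext => a; apply: funext => b; apply: funext => c.
pose N := (a + b + c).+1.
transitivity (coef3 (1 * tr N f) a b c).
  rewrite coef3M; apply: smul_local => i j k Hi Hj Hk.
    by rewrite coef3_1.
  by rewrite coef3_tr /N //; lia.
by rewrite mul1r coef3_tr /N //; lia.
Qed.

Lemma smulDl : left_distributive smul sadd.
Proof.
move=> f g h; apply: funext => a; apply: funext => b; apply: funext => c.
rewrite /smul /sadd -!big_split /=; apply: eq_bigr => i _.
rewrite -!big_split /=; apply: eq_bigr => j _.
rewrite -!big_split /=; apply: eq_bigr => k _.
by rewrite mulrDl.
Qed.

Definition ser := series.
HB.instance Definition _ := gen_eqMixin ser.
HB.instance Definition _ := gen_choiceMixin ser.

Lemma saddA : associative sadd.
Proof. by move=> f g h; do 3 (apply: funext => ?); rewrite /sadd addrA. Qed.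
Lemma saddC : commutative sadd.
Proof. by move=> f g; do 3 (apply: funext => ?); rewrite /sadd addrC. Qed.
Lemma sadd0 : left_id szero sadd.
Proof. by move=> f; do 3 (apply: funext => ?); rewrite /sadd add0r. Qed.
Lemma saddN : left_inverse szero sopp sadd.
Proof. by move=> f; do 3 (apply: funext => ?); rewrite /sadd /sopp addNr. Qed.

HB.instance Definition _ := GRing.isZmodule.Build ser saddA saddC sadd0 saddN.

Lemma sone_neq0 : (sone : ser) != szero.
Proof.
apply/eqP => H; have := congr1 (fun f : series => f 0%N 0%N 0%N) H.
by rewrite /sone /smono /szero.
Qed.

HB.instance Definition _ := GRing.Zmodule_isComNzRing.Build ser smulA smulC smul1 smulDl sone_neq0.


Lemma spowE (f : ser) n : spow f n = f ^+ n.
Proof.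
elim: n => [|n IH] //=.
by rewrite exprS -IH.
Qed.

Lemma ser_addE (f g : ser) a b c : (f + g) a b c = f a b c + g a b c.
Proof. by []. Qed.
Lemma ser_oppE (f : ser) a b c : (- f) a b c = - f a b c.
Proof. by []. Qed.
Lemma ser_subE (f g : ser) a b c : (f - g) a b c = f a b c - g a b c.
Proof. by []. Qed.
Lemma ser_mulE (f g : ser) a b c : (f * g) a b c = smul f g a b c.
Proof. by []. Qed.
Lemma ser_oneE a b c : (1 : ser) a b c = sone a b c.
Proof. by []. Qed.
Lemma ser_zeroE a b c : (0 : ser) a b c = 0.
Proof. by []. Qed.

Lemma ser_sumE (I : Type) (r : seq I) (P : pred I) (F : I -> ser) a b c :
  (\sum_(i <- r | P i) F i) a b c = \sum_(i <- r | P i) F i a b c.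
Proof.
elim/big_rec2: _ => // i x y _ <-.
by [].
Qed.

Lemma ser_ext (f g : ser) : (forall a b c, f a b c = g a b c) -> f = g.
Proof. by move=> H; do 3 (apply: funext => ?); apply: H. Qed.

Definition m3 p q r : {poly {poly {poly int}}} := 'X^p * ('X^q * ('X^r)%:P)%:P.

Lemma coef3_m3 p q r a b c : coef3 (m3 p q r) a b c = smono p q r a b c.
Proof.
rewrite /coef3 /m3 /smono coefXnM.
case: (ltnP a p) => Hap.
  by rewrite coef0 coef0; have -> : (a == p) = false by apply/negbTE; rewrite neq_ltn Hap.
rewrite coefC; case: eqP => Ha.
  have -> : a == p by apply/eqP; lia.
  rewrite /= coefXnM; case: (ltnP b q) => Hbq.
    by rewrite coef0; have -> : (b == q) = false by apply/negbTE; rewrite neq_ltn Hbq.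
  rewrite coefC; case: eqP => Hb.
    have -> : b == q by apply/eqP; lia.
    rewrite /= coefXn; by case: (c == r).
  rewrite coef0; have -> : (b == q) = false by apply/negbTE/eqP; lia.
  by [].
rewrite coef0 coef0; have -> : (a == p) = false by apply/negbTE/eqP; lia.
by [].
Qed.

Lemma smul_monoE p q r f a b c :
  smul (smono p q r) f a b c =
  if [&& p <= a, q <= b & r <= c]%N then f (a - p)%N (b - q)%N (c - r)%N else 0.
Proof.
pose N := (a + b + c).+1.
transitivity (coef3 (m3 p q r * tr N f) a b c).
  rewrite coef3M; apply: smul_local => i j k Hi Hj Hk.
    by rewrite coef3_m3.
  by rewrite coef3_tr /N //; lia.
rewrite /coef3 /m3 -mulrA coefXnM.
case: (ltnP a p) => Hap /=.
  by rewrite coef0 coef0.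
rewrite coefCM -mulrA coefXnM.
case: (ltnP b q) => Hbq /=.
  by rewrite coef0.
rewrite coefCM coefXnM.
case: (ltnP c r) => Hcr //=.
rewrite (_ : (tr N f)`_(a-p)%N`_(b-q)%N`_(c-r)%N = coef3 (tr N f) (a-p)%N (b-q)%N (c-r)%N) //.
by rewrite coef3_tr /N //; lia.
Qed.

Lemma mono_mulE p q r (f : ser) (a b c : nat) :
  ((smono p q r : ser) * f) a b c =
  if [&& p <= a, q <= b & r <= c]%N then f (a - p)%N (b - q)%N (c - r)%N else 0.
Proof. exact: smul_monoE. Qed.

Lemma mono_mul p q r p' q' r' :
  (smono p q r : ser) * smono p' q' r' = smono (p + p') (q + q') (r + r').
Proof.
apply: ser_ext => a b c; rewrite mono_mulE /smono.
case: (leqP p a) => Ha /=; last first.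
  by have -> : (a == p + p')%N = false by apply/negbTE/eqP; lia.
case: (leqP q b) => Hb /=; last first.
  have -> : (b == q + q')%N = false by apply/negbTE/eqP; lia.
  by rewrite andbF.
case: (leqP r c) => Hc /=; last first.
  have -> : (c == r + r')%N = false by apply/negbTE/eqP; lia.
  by rewrite !andbF.
have E1 : (a - p == p')%N = (a == p + p')%N by apply/eqP/eqP; lia.
have E2 : (b - q == q')%N = (b == q + q')%N by apply/eqP/eqP; lia.
have E3 : (c - r == r')%N = (c == r + r')%N by apply/eqP/eqP; lia.
by rewrite E1 E2 E3.
Qed.

Lemma mono_exp p q r n : (smono p q r : ser) ^+ n = smono (n * p) (n * q) (n * r).
Proof.
elim: n => [|n IH]; first by rewrite expr0 !mul0n.
by rewrite exprS IH mono_mul !mulSn.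
Qed.

Lemma sum_widen (V : zmodType) (G : nat -> V) M N : (M <= N)%N ->
  (forall m, (M <= m)%N -> G m = 0) -> \sum_(m < N) G m = \sum_(m < M) G m.
Proof.
move=> HMN HG; rewrite -(subnKC HMN) big_split_ord /= [X in _ + X]big1 ?addr0 // => i _.
by apply: HG; rewrite leq_addr.
Qed.

Lemma sum_split (V : zmodType) (G : nat -> V) M N :
  \sum_(m < M + N) G m = \sum_(m < M) G m + \sum_(m < N) G (M + m)%N.
Proof. by rewrite big_split_ord. Qed.

Definition ssum (p q r : nat) (u : nat -> ser) : ser := fun a b c =>
  \sum_(m < (a + b + c).+1)
    (if [&& m * p <= a, m * q <= b & m * r <= c]%N
     then u m (a - m * p)%N (b - m * q)%N (c - m * r)%N else 0).

Lemma ssum_trunc p q r u N (a b c : nat) : (0 < p + q + r)%N -> (a + b + c < N)%N ->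
  ssum p q r u a b c = (\sum_(m < N) (smono p q r : ser) ^+ m * u m) a b c.
Proof.
move=> Hpos HN; rewrite ser_sumE.
under [RHS]eq_bigr do rewrite mono_exp mono_mulE.
rewrite (@sum_widen _ (fun m => if [&& m * p <= a, m * q <= b & m * r <= c]%N
   then u m (a - m * p)%N (b - m * q)%N (c - m * r)%N else 0) (a + b + c).+1 N) //.
move=> m Hm /=; case: ifP => // /and3P [H1 H2 H3].
have : (m * (p + q + r) <= a + b + c)%N by rewrite !mulnDr; lia.
by nia.
Qed.

Lemma ssum_mulr p q r u (g : ser) : (0 < p + q + r)%N ->
  ssum p q r u * g = ssum p q r (fun m => u m * g).
Proof.
move=> Hpos; apply: ser_ext => a b c.
pose N := (a + b + c).+1.
rewrite ser_mulE.
transitivity (smul (\sum_(m < N) (smono p q r : ser) ^+ m * u m) g a b c).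
  apply: smul_local => // i j k Hi Hj Hk.
  by rewrite (@ssum_trunc _ _ _ _ N) // /N; lia.
rewrite -ser_mulE mulr_suml (@ssum_trunc _ _ _ _ N) //.
by under eq_bigr do rewrite -mulrA.
Qed.

Lemma ssum_sub p q r u v :
  ssum p q r (fun m => u m - v m) = ssum p q r u - ssum p q r v.
Proof.
apply: ser_ext => a b c; rewrite ser_subE /ssum -sumrB.
by apply: eq_bigr => i _; case: ifP; rewrite ?subr0.
Qed.

Lemma ssum_ext p q r u v : (forall m, u m = v m) -> ssum p q r u = ssum p q r v.
Proof. by move=> H; rewrite /ssum; do 3 (apply: funext => ?); apply: eq_bigr => i _; rewrite H. Qed.

Lemma ssum_shift p q r u n : (0 < p + q + r)%N ->
  (smono p q r : ser) ^+ n * ssum p q r u =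
  ssum p q r (fun m => if (n <= m)%N then u (m - n)%N else 0).
Proof.
move=> Hpos; apply: ser_ext => a b c.
pose N := (a + b + c).+1.
rewrite ser_mulE.
transitivity (smul ((smono p q r : ser) ^+ n) (\sum_(m < N) (smono p q r : ser) ^+ m * u m) a b c).
  apply: smul_local => // i j k Hi Hj Hk.
  by rewrite (@ssum_trunc _ _ _ _ N) // /N; lia.
rewrite -ser_mulE mulr_sumr (@ssum_trunc _ _ _ _ (n + N)) //; last by rewrite /N; lia.
rewrite (@sum_split _ (fun m => (smono p q r : ser) ^+ m * (if (n <= m)%N then u (m - n)%N else 0)) n N).
rewrite [\sum_(m < n) _]big1 ?add0r; last first.
  move=> i _ /=; rewrite ifF ?mulr0 //; apply/negbTE; rewrite -ltnNge; exact: ltn_ord.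
rewrite !ser_sumE; apply: eq_bigr => i _.
by rewrite leq_addr addKn exprD mulrA.
Qed.

Lemma ssum_fin p q r u M : (0 < p + q + r)%N ->
  (forall m, (M <= m)%N -> u m = 0) ->
  ssum p q r u = \sum_(m < M) (smono p q r : ser) ^+ m * u m.
Proof.
move=> Hpos Hu; apply: ser_ext => a b c.
rewrite (@ssum_trunc _ _ _ _ (M + (a + b + c).+1)) //; last by lia.
rewrite (@sum_widen _ (fun m => (smono p q r : ser) ^+ m * u m) M) // => [|m Hm]; first by rewrite leq_addr.
by rewrite Hu ?mulr0.
Qed.

Lemma ssumY0 u (a b c : nat) :
  (forall m a b c, c != 0%N -> u m a b c = 0) ->
  ssum 0 0 1 u a b c = u c a b 0%N.
Proof.
move=> Hu; rewrite /ssum.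
have Hc : (c < (a + b + c).+1)%N by lia.
rewrite (bigD1 (Ordinal Hc)) //= big1 ?addr0.
  by rewrite !muln0 !subn0 muln1 leqnn !leq0n subnn.
move=> [m Hm] /= Hne; rewrite !muln0 muln1 !leq0n /=.
case: ifP => // Hmc; apply: Hu.
have : m != c by apply: contra Hne => /eqP Hmc'; apply/eqP; apply: val_inj.
by lia.
Qed.

Definition h (w : nat -> nat) (m : nat) : ser :=
  fun a b c => if c == 0%N then (Nst w m b a)%:Z else 0.

Definition fw (w : nat -> nat) (v : nat) : ser := 1 - (smono (w v) 1%N 0%N : ser).

Lemma h_supp w m a b c : c != 0%N -> h w m a b c = 0.
Proof. by rewrite /h => /negbTE ->. Qed.

Lemma h0 w : h w 0 = 1.
Proof.
apply: ser_ext => a b c; rewrite ser_oneE /h /sone /smono Nst_0k.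
by case: c => [|c] //=; case: a => [|a]; case: b => [|b].
Qed.

Lemma hrec w m : h w m.+1 * fw w m.+1 = h w m.
Proof.
apply: ser_ext => a b c; rewrite /fw mulrBr mulr1 ser_subE mulrC mono_mulE.
rewrite /h subn0 leq0n andbT.
case: c => [|c] /=; last by rewrite if_same subr0.
case: b => [|b] /=; first by rewrite andbF subr0 !Nst_m0.
rewrite subn1 /= Nst_SS.
by rewrite ltn0Sn andbT; case: (leqP (w m.+1) a) => H; rewrite ?subr0 ?addn0 // PoszD addrK.
Qed.

Lemma hiter w c n : h w (c + n) * \prod_(i < n) fw w (c + i.+1) = h w c.
Proof.
elim: n => [|n IH]; first by rewrite big_ord0 mulr1 addn0.
rewrite big_ord_recr /= addnS mulrC -mulrA (mulrC (fw w _)) hrec.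
by rewrite mulrC IH.
Qed.

Lemma prod_period w d c : (forall v, w (v + d.+1)%N = w v) ->
  \prod_(i < d.+1) fw w (c + i.+1) = \prod_(i < d.+1) fw w i.+1.
Proof.
move=> Hw; elim: c => [|c IH]; first by [].
rewrite -IH big_ord_recr big_ord_recl /= mulrC; congr (_ * _).
  by rewrite addn1 /fw Hw.
by apply: eq_bigr => i _; congr (fw w _); rewrite /bump /=; lia.
Qed.

Lemma prod_split (F : nat -> ser) n r : (r <= n)%N ->
  \prod_(i < n) F i = \prod_(i < r) F i * \prod_(i < n - r) F (r + i)%N.
Proof.
move=> H; rewrite -[in LHS](subnKC H) big_split_ord /=; by [].
Qed.

Section Generic.
Variables (w : nat -> nat) (d e1 e2 : nat).
Hypothesis Hw : forall v, w (v + d.+1)%N = w v.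
Hypothesis Hw1 : w 1 = e1.
Hypothesis Hw2 : forall v, (2 <= v <= d.+1)%N -> w v = e2.

Definition Aw : ser := \prod_(i < d.+1) fw w i.+1.

Lemma AwE : Aw = (1 - (smono e1 1%N 0%N : ser)) * (1 - (smono e2 1%N 0%N : ser)) ^+ d.
Proof.
rewrite /Aw big_ord_recl /= /fw Hw1; congr (_ * _).
rewrite (eq_bigr (fun _ => 1 - (smono e2 1%N 0%N : ser))) ?prodr_const ?card_ord //.
move=> i _; rewrite Hw2 //; rewrite /bump /=.
by have := ltn_ord i; lia.
Qed.

Lemma hAw_big c : h w (c + d.+1) * Aw = h w c.
Proof. by rewrite /Aw -(@prod_period w d c Hw) hiter. Qed.

Lemma hAw_small r : (1 <= r <= d)%N -> h w r * Aw = (1 - (smono e2 1%N 0%N : ser)) ^+ (d.+1 - r).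
Proof.
move=> Hr; rewrite /Aw (@prod_split (fun i => fw w i.+1) d.+1 r); last by lia.
rewrite mulrA.
have -> : h w r * \prod_(i < r) fw w i.+1 = 1.
  by have := hiter w 0 r; rewrite add0n h0.
rewrite mul1r (eq_bigr (fun _ => 1 - (smono e2 1%N 0%N : ser))) ?prodr_const ?card_ord //.
move=> i _; rewrite /fw Hw2 //.
by have := ltn_ord i; lia.
Qed.

Lemma S_rel p q r : (0 < p + q + r)%N ->
  ssum p q r (h w) * (Aw - (smono p q r : ser) ^+ d.+1) =
  Aw + \sum_(m < d) (smono p q r : ser) ^+ m.+1 * (1 - (smono e2 1%N 0%N : ser)) ^+ (d - m).
Proof.
move=> Hpos.
rewrite mulrBr ssum_mulr // mulrC ssum_shift // -ssum_sub.
rewrite (@ssum_ext _ _ _ _ (fun m => if (m < d.+1)%N then h w m * Aw else 0)); last first.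
  move=> m; case: (ltnP m d.+1) => Hm; first by rewrite subr0.
  by rewrite -{1}(subnK Hm) hAw_big subrr.
rewrite (@ssum_fin _ _ _ _ d.+1) // => [|m Hm]; last by rewrite ltnNge Hm.
rewrite big_ord_recl /= expr0 mul1r h0 mul1r; congr (_ + _).
apply: eq_bigr => i _; rewrite /bump leq0n add1n ltnS ltn_ord hAw_small //.
by have := ltn_ord i; lia.
Qed.

End Generic.

Lemma geom (R : comNzRingType) (u y : R) n :
  (y - u) * \sum_(m < n) y ^+ m.+1 * u ^+ (n - m) = u * y * (y ^+ n - u ^+ n).
Proof.
elim: n => [|n IH]; first by rewrite big_ord0 !expr0 subrr !mulr0.
rewrite big_ord_recr /= subSnn expr1.
rewrite (eq_bigr (fun m : 'I_n => u * (y ^+ m.+1 * u ^+ (n - m)))); last first.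
  by move=> i _; rewrite subSn ?exprS; [ring | rewrite ltnW].
rewrite -mulr_sumr.
set S := \sum_(i < n) _.
transitivity (u * ((y - u) * S) + (y - u) * y ^+ n.+1 * u); first by ring.
rewrite IH !exprS; ring.
Qed.

Local Close Scope ring_scope.

Definition wF (d v : nat) : nat := (v %% d.+1 == 1 %% d.+1).
Definition wG (d v : nat) : nat := (1 - wF d v)%N.

Lemma wF_period d v : wF d (v + d.+1) = wF d v.
Proof. by rewrite /wF modnDr. Qed.
Lemma wG_period d v : wG d (v + d.+1) = wG d v.
Proof. by rewrite /wG wF_period. Qed.
Lemma wF1 d : wF d 1 = 1%N.
Proof. by rewrite /wF eqxx. Qed.
Lemma wG1 d : wG d 1 = 0%N.
Proof. by rewrite /wG wF1. Qed.
Lemma wF2 d v : (1 <= d)%N -> (2 <= v <= d.+1)%N -> wF d v = 0%N.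
Proof.
move=> hd /andP [H1 H2]; have H1d : 1 < d.+1 by lia.
rewrite /wF (modn_small H1d).
case: (ltnP v d.+1) => H3.
  by rewrite modn_small //; case: (v =P 1) => [Hv|] //; rewrite Hv in H1.
have -> : v = d.+1 by lia.
by rewrite modnn.
Qed.
Lemma wG2 d v : (1 <= d)%N -> (2 <= v <= d.+1)%N -> wG d v = 1%N.
Proof. by move=> hd Hv; rewrite /wG wF2. Qed.

Lemma mod_st d s : mod_d d s = st (wF d) s.
Proof. by elim: s => [|x s IH] //=; rewrite /st /= -/(st _ s) -IH /mod_d /=. Qed.

Lemma mod'_st d s : mod'_d d s = st (wG d) s.
Proof.
rewrite /mod'_d mod_st; elim: s => [|x s IH] //=.
rewrite /st /= -!/(st _ s) -IH /wG.
have : (st (wF d) s <= size s)%N.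
  by rewrite -mod_st /mod_d count_size.
rewrite /wF; case: (_ == _) => /=; lia.
Qed.

Lemma is_partition_D m k s : s \in D m k.+1 -> is_partition s.
Proof.
rewrite memD /is_partition => /and3P [Hs -> Hall].
apply/andP; split.
  by case: s Hs Hall.
by apply: sub_all Hall => a /andP [].
Qed.

Lemma all_le_largest s : sorted geq s -> all (fun a => a <= largest s)%N s.
Proof.
case: s => [|x s] //= H; rewrite leqnn /=.
by move: H; rewrite (path_sortedE geq_trans) => /andP [].
Qed.

Lemma count_D_mono (P : pred (seq nat)) m n k : (m <= n)%N ->
  (forall s, s \in D n k -> P s -> all (fun a => a <= m)%N s) ->
  count P (D n k) = count P (D m k).
Proof.
move=> Hmn H; rewrite -!size_filter; apply: perm_size; apply: uniq_perm.
- by rewrite filter_uniq ?uniq_D.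
- by rewrite filter_uniq ?uniq_D.
move=> s; rewrite !mem_filter; apply/andP/andP => [[HP Hs]|[HP Hs]]; split => //.
  have Hm := H s Hs HP; move: Hs; rewrite !memD => /and3P [-> -> Hall] /=.
  apply/allP => a Ha; move/allP: Hall => /(_ a Ha) /andP [-> _].
  by move/allP: Hm => /(_ a Ha).
move: Hs; rewrite !memD => /and3P [-> -> Hall] /=.
by apply: sub_all Hall => a /andP [-> Ha]; rewrite (leq_trans Ha).
Qed.

Lemma coefA_count d j k m : coefA d j k m =
  count (fun s => [&& is_partition s, largest s == m & mod_d d s == j]) (D m k).
Proof.
rewrite /coefA.
apply: (@card_tuple_D m k (fun s => [&& is_partition s, largest s == m & mod_d d s == j])).
by move=> s /and3P [/and3P [_ -> ->] _ _].
Qed.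



Local Open Scope ring_scope.
Notation YY := (sY : ser).
Notation XX := (sX : ser).
Notation TT := (sT : ser).

Lemma Fser d : (1 <= d)%N ->
  ((fun a b c => Posz (coefA d a b c)) : ser) = (1 - YY) * ssum 0 0 1 (h (wF d)) - 1.
Proof.
move=> hd; apply: ser_ext => a b c.
rewrite mulrBl mul1r !ser_subE ser_oneE /sY mono_mulE !ssumY0; try by move=> *; apply: h_supp.
rewrite coefA_count /h /= !subn0.
case: c => [|c].
  case: b => [|b].
    by rewrite /= Nst_m0 /sone /smono /=; case: a.
  by rewrite /= Nst_0k /sone /smono /= !andbF.
have -> : sone a b c.+1 = 0 by rewrite /sone /smono /= !andbF.
rewrite subr0 ltn0Sn subn1 succnK.
case: b => [|b]; first by rewrite D_0 /= !Nst_m0 subrr.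
rewrite /Nst (count_largest (fun s => st (wF d) s == a) c b.+1) PoszD addrAC subrr add0r; congr Posz.
apply: eq_in_count => s Hs.
by rewrite (@is_partition_D c.+1 b s Hs) mod_st.
Qed.

Local Close Scope ring_scope.

Lemma termB d g k a : (k <= g)%N ->
  #|[set u : k.-tuple 'I_g.+1 | let s := map val u in
      [&& is_partition s, perimeter s == g & mod'_d d s == a]]| =
  count (fun s => (largest s == (g - k).+1) && (st (wG d) s == a)) (D (g - k).+1 k).
Proof.
move=> Hk.
rewrite (@card_tuple_D g k (fun s => [&& is_partition s, perimeter s == g & mod'_d d s == a])); last first.
  by move=> s /and3P [/and3P [_ -> ->] _ _].
case: k Hk => [|k] Hk; first by rewrite !D_0.
rewrite (@eq_in_count _ _ (fun s => (largest s == (g - k.+1).+1) && (st (wG d) s == a))); last first.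
  move=> s Hs; rewrite (@is_partition_D g k s Hs) mod'_st /=; congr andb.
  move: Hs; rewrite memD => /and3P [/eqP Hsz _ _].
  rewrite /perimeter Hsz; apply/eqP/eqP; lia.
apply: count_D_mono; first by lia.
move=> s Hs /andP [/eqP Hl _]; rewrite -Hl; apply: all_le_largest.
by move: Hs; rewrite memD => /and3P [].
Qed.



Local Open Scope ring_scope.
Definition fG d (m : nat) : ser :=
  if m is m'.+1 then h (wG d) m'.+1 - h (wG d) m' else 0.

Lemma xS d : (1 - XX) * ssum 0 1 0 (h (wG d)) - 1 = ssum 0 1 0 (fG d).
Proof.
rewrite mulrBl mul1r.
have E1 : XX * ssum 0 1 0 (h (wG d)) =
    ssum 0 1 0 (fun m => if (1 <= m)%N then h (wG d) (m - 1) else 0).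
  by have := @ssum_shift 0 1 0 (h (wG d)) 1 isT; rewrite expr1.
have E2 : (1 : ser) = ssum 0 1 0 (fun m => if m == 0%N then 1 else 0).
  rewrite (@ssum_fin _ _ _ _ 1) //; last by move=> [|m].
  by rewrite big_ord1 /= expr0 mul1r.
transitivity (ssum 0 1 0 (h (wG d)) -
  ssum 0 1 0 (fun m => if (1 <= m)%N then h (wG d) (m - 1) else 0) -
  ssum 0 1 0 (fun m => if m == 0%N then 1 else 0)); first by rewrite E1 -E2.
rewrite -!ssum_sub; apply: ssum_ext => [[|m]] /=.
  by rewrite h0 subr0 subrr.
by rewrite subn1 /= subr0.
Qed.

Lemma Gser d : (1 <= d)%N ->
  XX * ((fun a b c => if c == 0%N then Posz (coefB d a b) else 0) : ser) = ssum 0 1 0 (fG d).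
Proof.
move=> hd; apply: ser_ext => a b c.
rewrite /sX mono_mulE /ssum.
under [RHS]eq_bigr do rewrite !muln0 muln1 !leq0n !subn0 andbT /=.
rewrite !leq0n !subn0 andbT /=.
case: c => [|c]; last first.
  rewrite if_same big1 // => [[m Hm] _] /=.
  case: m Hm => [|m] Hm /=; first by [].
  by case: ifP => // _; rewrite ser_subE !h_supp // subrr.
rewrite (@sum_widen _ (fun m => if (m <= b)%N then fG d m a (b - m)%N 0%N else 0) b.+1); last 2 first.
- by lia.
- by move=> m Hm; rewrite leqNgt Hm.
under eq_bigr do rewrite -ltnS ltn_ord.
case: b => [|g]; first by rewrite big_ord1.
rewrite big_ord_recl /= add0r subn1 /= /coefB.
rewrite (big_morph Posz PoszD (erefl _)).
rewrite (reindex_inj rev_ord_inj) /=.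
apply: eq_bigr => [[k Hk]] _.
rewrite termB /=; last by lia.
rewrite ser_subE /h eqxx /bump leq0n add1n add0n.
have -> : (g - (g.+1 - k.+1))%N = k by lia.
rewrite /Nst (count_largest (fun s => st (wG d) s == a) k (g.+1 - k.+1)).
by rewrite PoszD addrAC subrr add0r.
Qed.

Lemma mulX_inj (f g : ser) : XX * f = XX * g -> f = g.
Proof.
move=> H; apply: ser_ext => a b c.
have := congr1 (fun k : ser => k a b.+1 c) H.
by rewrite /= /sX !mono_mulE !leq0n /= subn0 subn1 /= subn0.
Qed.

Lemma eTX : (smono 1 1 0 : ser) = TT * XX.
Proof. by rewrite /sT /sX mono_mul. Qed.

Lemma Ffinal d : (1 <= d)%N ->
  ((1 - YY) * ssum 0 0 1 (h (wF d)) - 1) *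
    (((1 - TT * XX) * (1 - XX) ^+ d - YY ^+ d.+1) * (XX + YY - 1))
  = TT * XX * YY * (1 - XX) ^+ d * (XX + YY - 1)
    + XX * YY * (YY ^+ d.+1 - YY * (1 - XX) ^+ d).
Proof.
move=> hd.
have HS := @S_rel (wF d) d 1 0 (wF_period d) (wF1 d) (fun v Hv => @wF2 d v hd Hv) 0 0 1 isT.
rewrite (@AwE (wF d) d 1 0 (wF1 d) (fun v Hv => @wF2 d v hd Hv)) eTX in HS.
change (smono 0 1 0) with sX in HS; change (smono 0 0 1) with sY in HS.
have HU := @geom _ (1 - XX) YY d.
set S := ssum 0 0 1 (h (wF d)) in HS *.
set U := \sum_(m < d) _ in HS HU.
rewrite !exprS in HS *.
set B := (1 - XX) ^+ d in HS HU *.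
set Yd := YY ^+ d in HS HU *.
transitivity ((1 - YY) * (XX + YY - 1) * (S * ((1 - TT * XX) * B - YY * Yd))
   - ((1 - TT * XX) * B - YY * Yd) * (XX + YY - 1)); first by ring.
rewrite HS.
transitivity ((1 - YY) * ((YY - (1 - XX)) * U) + (1 - YY) * (XX + YY - 1) * ((1 - TT * XX) * B)
   - ((1 - TT * XX) * B - YY * Yd) * (XX + YY - 1)); first by ring.
rewrite HU; ring.
Qed.

Lemma Gfinal d (G : ser) : (1 <= d)%N ->
  XX * G = (1 - XX) * ssum 0 1 0 (h (wG d)) - 1 ->
  G * ((1 - XX - TT * XX) * ((1 - TT * XX) ^+ d * (XX - 1) + XX ^+ d.+1))
  = XX * (TT * XX ^+ d.+1 + (1 - TT * XX) ^+ d * (XX - 1)).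
Proof.
move=> hd HG; apply: mulX_inj.
have HS := @S_rel (wG d) d 0 1 (wG_period d) (wG1 d) (fun v Hv => @wG2 d v hd Hv) 0 1 0 isT.
rewrite (@AwE (wG d) d 0 1 (wG1 d) (fun v Hv => @wG2 d v hd Hv)) eTX in HS.
change (smono 0 1 0) with sX in HS.
have HU := @geom _ (1 - TT * XX) XX d.
set S := ssum 0 1 0 (h (wG d)) in HS HG.
set U := \sum_(m < d) _ in HS HU.
rewrite !exprS in HS *.
set V := (1 - TT * XX) ^+ d in HS HU *.
set Xd := XX ^+ d in HS HU *.
rewrite mulrA HG.
transitivity (- (1 - XX) * (1 - XX - TT * XX) * (S * ((1 - XX) * V - XX * Xd))
   - ((1 - XX - TT * XX) * (V * (XX - 1) + XX * Xd))); first by ring.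
rewrite HS.
transitivity ((1 - XX) * ((XX - (1 - TT * XX)) * U)
   - (1 - XX) * (1 - XX - TT * XX) * ((1 - XX) * V)
   - ((1 - XX - TT * XX) * (V * (XX - 1) + XX * Xd))); first by ring.
rewrite HU; ring.
Qed.

Local Close Scope ring_scope.

Theorem lemma3p1 (d : nat) (hd : (1 <= d)%N) :
  let F : series := fun a b c => Posz (coefA d a b c) in
  let G : series := fun a b c => if c == 0%N then Posz (coefB d a b) else 0%R in
  ((F * (((1 - sT * sX) * (1 - sX) ^ d - sY ^ d.+1) * (sX + sY - 1))
    = sT * sX * sY * (1 - sX) ^ d * (sX + sY - 1)
      + sX * sY * (sY ^ d.+1 - sY * (1 - sX) ^ d))%ser
  /\
  (G * ((1 - sX - sT * sX) * ((1 - sT * sX) ^ d * (sX - 1) + sX ^ d.+1))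
    = sX * (sT * sX ^ d.+1 + (1 - sT * sX) ^ d * (sX - 1)))%ser).
Proof.
move=> F G; split.
  rewrite !spowE.
  have HF : (F : ser) = ((1 - YY) * ssum 0 0 1 (h (wF d)) - 1)%R := @Fser d hd.
  rewrite HF.
  exact: (@Ffinal d hd).
rewrite !spowE.
apply: (@Gfinal d G hd).
by rewrite (@Gser d hd) xS.
Qed.
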